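(* Let $G=(V,E)$ be an undirected graph, define $p_1(\emptyset)=0$, $p_1(V)=|E|$, $p_1(X)=i_G(X)+1$ for $\emptyset\subset X\subset V$, and $B_1=\{x\in\mathbb{R}^V:\widetilde x(V)=p_1(V),\ \widetilde x(X)\ge p_1(X)\ \forall X\subset V\}$. Let $D$ be a strongly connected orientation of $G$ with in-degree vector $m$ and let $s,t\in V$. Then $m+\chi_s-\chi_t\in B_1$ if and only if $D$ contains two arc-disjoint directed paths from $s$ to $t$.
   Context: $i_G(X)$ is the number of edges with both end-nodes in $X$; $\widetilde x(X)=\sum_{v\in X}x(v)$; $\chi_v$ is the unit vector of $v$; $m(v)=\varrho_D(v)$ is the number of arcs with head $v$. *)

(* Defs.v *)
From mathcomp Require Import all_boot all_order all_algebra.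
Set Implicit Arguments. Unset Strict Implicit. Unset Printing Implicit Defensive.
Import Order.TTheory GRing.Theory Num.Theory.

(* A (multi)graph G = (V, E) together with an orientation D of it is given by
   a finite node type V, a finite edge type E, and for each edge e its tail
   [tl e] and head [hd e] in D; the undirected edge e of G joins tl e and hd e. *)

Section Defs.
Variables (V E : finType) (tl hd : E -> V).

Definition iG (X : {set V}) : nat := #|[set e | (tl e \in X) && (hd e \in X)]|.

Definition indeg (v : V) : nat := #|[set e | hd e == v]|.

Definition p1 (X : {set V}) : nat :=
  if X == set0 then 0%N
  else if X == setT then #|E|
  else (iG X).+1.

Local Open Scope ring_scope.

Definition xsum (R : numDomainType) (x : V -> R) (X : {set V}) : R :=
  \sum_(v in X) x v.

Definition inB1 (R : numDomainType) (x : V -> R) : Prop :=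
  xsum x setT = (p1 setT)%:R /\ forall X : {set V}, (p1 X)%:R <= xsum x X.

Definition chi (R : numDomainType) (v : V) : V -> R := fun u => (u == v)%:R.

Definition arcrel : rel V := fun u v => [exists e, (tl e == u) && (hd e == v)].
Definition strongly_connected : Prop := forall u v : V, connect arcrel u v.

Fixpoint arc_walk (u t : V) (p : seq E) : bool :=
  match p with
  | [::] => u == t
  | e :: p' => (tl e == u) && arc_walk (hd e) t p'
  end.
Definition dpath (s t : V) (p : seq E) : bool :=
  arc_walk s t p && uniq (s :: map hd p).

End Defs.

(* Main.v *)
Require Import Defs.
From mathcomp Require Import all_boot all_order all_algebra.
From mathcomp Require Import ring lra zify.
Import Order.TTheory GRing.Theory Num.Theory.
Set Implicit Arguments. Unset Strict Implicit. Unset Printing Implicit Defensive.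
Local Open Scope ring_scope.

Lemma sum_ind_eq (R : pzRingType) (T : finType) (P : pred T) (w : T) :
  \sum_(v | P v) ((v == w)%:R : R) = (P w)%:R.
Proof.
case: (boolP (P w)) => Hw.
  rewrite (bigD1 w) //= eqxx big1 ?addr0 // => v /andP[_ /negPf ->] //.
rewrite big1 // => v Hv; case: eqP => // E; by rewrite -E Hv in Hw.
Qed.

Lemma sum_ind_eqn (T : finType) (P : pred T) (w : T) :
  (\sum_(v | P v) (v == w) = P w)%N.
Proof.
case: (boolP (P w)) => Hw.
  rewrite (bigD1 w) //= eqxx big1 ?addn0 // => v /andP[_ /negPf ->] //.
rewrite big1 // => v Hv; case: eqP => // E; by rewrite -E Hv in Hw.
Qed.

Lemma card_sum (T : finType) (P : pred T) : #|[set x | P x]| = (\sum_x P x)%N.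
Proof. by rewrite -sum1dep_card big_mkcond /=; apply: eq_bigr => x _; case: (P x). Qed.

Section G.
Variable V : finType.

Fixpoint gwalk (A : Type) (src dst : A -> V) (u : V) (q : seq A) : bool :=
  match q with
  | [::] => true
  | a :: q' => (src a == u) && gwalk src dst (dst a) q'
  end.

Lemma gwalk_sum (A : Type) (src dst : A -> V) u q v :
  gwalk src dst u q ->
  \sum_(a <- q) ((dst a == v)%:Z - (src a == v)%:Z) =
  (last u (map dst q) == v)%:Z - (u == v)%:Z.
Proof.
elim: q u => [|a q IH] u /=; first by rewrite big_nil subrr.
move=> /andP[/eqP Hs Hw]; rewrite big_cons (IH (dst a)) // Hs; lra.
Qed.

Lemma path_gwalk (A : Type) (r : rel V) (src dst : A -> V) (ok : pred A) :
  (forall u w, r u w -> exists a, [&& ok a, src a == u & dst a == w]) ->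
  forall x p, path r x p -> exists q, [&& gwalk src dst x q, all ok q & map dst q == p].
Proof.
move=> H x p; elim: p x => [|y p IH] x /=; first by exists [::].
move=> /andP[/H [a /and3P[Ha /eqP Hs /eqP Hd]] /IH [q /and3P[Hq1 Hq2 /eqP Hq3]]].
by exists (a :: q); rewrite /= Hs Hd eqxx Hq1 Ha Hq2 Hq3 eqxx.
Qed.

Lemma connect_gwalk (A : Type) (r : rel V) (src dst : A -> V) (ok : pred A) s t :
  (forall u w, r u w -> exists a, [&& ok a, src a == u & dst a == w]) ->
  connect r s t ->
  exists q, [&& gwalk src dst s q, last s (map dst q) == t,
            uniq (s :: map dst q) & all ok q].
Proof.
move=> H /connectP [p Hp ->].
case: (shortenP Hp) => p' Hp' Hu _.
have [q /and3P[H1 H2 /eqP H3]] := path_gwalk H Hp'.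
by exists q; rewrite H1 H2 H3 eqxx Hu.
Qed.

End G.

Lemma sum_indZ (T : finType) (P : pred T) (w : T) :
  \sum_(v | P v) ((w == v)%:Z) = (P w)%:Z.
Proof.
case: (boolP (P w)) => Hw.
  rewrite (bigD1 w) //= eqxx big1 ?addr0 // => v /andP[_]; rewrite eq_sym => /negPf -> //.
rewrite big1 // => v Hv; case: eqP => // E; by rewrite E Hv in Hw.
Qed.
Section M.
Variables (V E : finType) (tl hd : E -> V).

Definition dd (e : E) (v : V) : int := (hd e == v)%:Z - (tl e == v)%:Z.
Definition bal (F : {set E}) v := \sum_(e in F) dd e v.
Definition din (X : {set V}) := #|[set e | (tl e \notin X) && (hd e \in X)]|.

Lemma arc_walkE u t p :
  arc_walk tl hd u t p = gwalk tl hd u p && (last u (map hd p) == t).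
Proof. by elim: p u => [|e p IH] u //=; rewrite IH andbA. Qed.

Lemma cut_sum (F : {set E}) (X : {set V}) :
  \sum_(v in X) bal F v = \sum_(e in F) ((hd e \in X)%:Z - (tl e \in X)%:Z).
Proof.
rewrite /bal exchange_big /=; apply: eq_bigr => e _.
rewrite /dd sumrB.
have K := sum_indZ (fun v => v \in X).
by rewrite !K.
Qed.

Lemma dpath_uniq s t P : dpath tl hd s t P -> uniq P.
Proof. by case/andP => _ /= /andP[_ /map_uniq]. Qed.

Lemma dpath_bal s t P v : dpath tl hd s t P ->
  bal [set e in P] v = (t == v)%:Z - (s == v)%:Z.
Proof.
move=> Hp; have Hu := dpath_uniq Hp.
case/andP: Hp; rewrite arc_walkE => /andP[Hw /eqP Hl] _.
rewrite /bal (eq_bigl (fun e => e \in P)); last by move=> e; rewrite inE.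
by rewrite -big_uniq // (gwalk_sum v Hw) Hl.
Qed.

Lemma extract (F : {set E}) s t :
  (forall X : {set V}, s \notin X -> t \in X ->
     exists2 e, e \in F & (tl e \notin X) && (hd e \in X)) ->
  exists P, dpath tl hd s t P && all (fun e => e \in F) P.
Proof.
move=> H.
pose r : rel V := fun u w => [exists e, [&& e \in F, tl e == u & hd e == w]].
have Hr : forall u w, r u w -> exists a, [&& (fun e => e \in F) a, tl a == u & hd a == w].
  by move=> u w /existsP.
case: (boolP (connect r s t)) => Hc.
  have [q /and4P[H1 H2 H3 H4]] := connect_gwalk Hr Hc.
  by exists q; rewrite /dpath arc_walkE H1 H2 H3 H4.
pose X := [set v | ~~ connect r s v].
have HsX : s \notin X by rewrite inE connect0.
have HtX : t \in X by rewrite inE.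
have [e He /andP[H1 H2]] := H X HsX HtX.
move: H1 H2; rewrite !inE negbK => H1 /negP []; apply: connect_trans H1 _.
by apply: connect1; apply/existsP; exists e; rewrite He !eqxx.
Qed.

Lemma extract_bal (F : {set E}) s t (k : nat) :
  (forall v, bal F v = (k.+1)%:Z * ((t == v)%:Z - (s == v)%:Z)) ->
  exists P, dpath tl hd s t P && all (fun e => e \in F) P.
Proof.
move=> Hb; apply: extract => X Hs Ht.
have E1 : \sum_(v in X) bal F v = (k.+1)%:Z.
  rewrite (eq_bigr _ (fun v _ => Hb v)) -mulr_sumr sumrB.
  have K := sum_indZ (fun v => v \in X).
  by rewrite !K Ht (negPf Hs) subr0 mulr1.
rewrite cut_sum in E1.
case: (boolP [exists e in F, (tl e \notin X) && (hd e \in X)]) => [/exists_inP//|Hn].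
have : \sum_(e in F) ((hd e \in X)%:Z - (tl e \in X)%:Z) <= 0.
  apply: sumr_le0 => e He.
  case: (boolP (hd e \in X)) => h; case: (boolP (tl e \in X)) => t' //=.
  by exfalso; apply: (negP Hn); apply/exists_inP; exists e => //; rewrite h t'.
by rewrite E1.
Qed.

Lemma walk_enter (X : {set V}) u w p : arc_walk tl hd u w p -> u \notin X -> w \in X ->
  exists2 e, e \in p & (tl e \notin X) && (hd e \in X).
Proof.
elim: p u => [|e p IH] u /=; first by move=> /eqP -> /negPf ->.
move=> /andP[/eqP Ht Hw] Hu Hwx.
case: (boolP (hd e \in X)) => Hh.
  by exists e; rewrite ?inE ?eqxx // Ht Hu Hh.
have [f Hf Hf2] := IH _ Hw Hh Hwx.
by exists f; rewrite // inE Hf orbT.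
Qed.

Lemma connect_enter (X : {set V}) u w : connect (arcrel tl hd) u w -> u \notin X -> w \in X ->
  exists e, (tl e \notin X) && (hd e \in X).
Proof.
move=> Hc Hu Hw.
have Hr : forall a b, arcrel tl hd a b -> exists e, [&& predT e, tl e == a & hd e == b].
  by move=> a b /existsP [e He]; exists e.
have [q /and4P[H1 H2 _ _]] := connect_gwalk Hr Hc.
have Hq : arc_walk tl hd u w q by rewrite arc_walkE H1 H2.
by have [e _ He] := walk_enter Hq Hu Hw; exists e.
Qed.

End M.
Lemma PoszSum (T : finType) (A : pred T) (F : T -> nat) :
  Posz (\sum_(i | A i) F i)%N = \sum_(i | A i) Posz (F i).
Proof. by rewrite (big_morph Posz PoszD (erefl _)). Qed.

Section N.
Variables (V E : finType) (tl hd : E -> V).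

Lemma indeg_sum (X : {set V}) :
  (\sum_(v in X) indeg hd v = iG tl hd X + din tl hd X)%N.
Proof.
rewrite /indeg /iG /din.
rewrite (eq_bigr (fun v => (\sum_e (hd e == v))%N)); last by move=> v _; rewrite card_sum.
rewrite exchange_big /= !card_sum -big_split /=; apply: eq_bigr => e _.
rewrite (eq_bigr (fun v => ((v == hd e) : nat)%N)); last by move=> v _; rewrite eq_sym.
rewrite sum_ind_eqn.
by case: (hd e \in X); case: (tl e \in X).
Qed.

Lemma xsum_eq (R : realFieldType) s t (X : {set V}) :
  xsum (fun v => (indeg hd v)%:R + chi R s v - chi R t v) X =
  (iG tl hd X + din tl hd X)%:R + (s \in X)%:R - (t \in X)%:R.
Proof.
rewrite /xsum /chi sumrB big_split /= -natr_sum indeg_sum.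
by rewrite !(sum_ind_eq R (fun v => v \in X)).
Qed.

Lemma iGT : iG tl hd setT = #|E|.
Proof.
rewrite /iG -cardsT; by apply: eq_card => e; rewrite !inE.
Qed.

Lemma dinT : din tl hd setT = 0%N.
Proof.
rewrite /din -(cards0 E); by apply: eq_card => e; rewrite !inE.
Qed.

Lemma p1T (s : V) : p1 tl hd setT = #|E|.
Proof.
rewrite /p1; case: eqP => [H|_]; last by rewrite eqxx.
by have := in_setT s; rewrite H inE.
Qed.

End N.
Section F.
Variables (V E : finType) (tl hd : E -> V).

Lemma fwd s t :
  (forall X : {set V}, s \notin X -> t \in X -> (2 <= din tl hd X)%N) ->
  exists P1 P2 : seq E,
     [/\ dpath tl hd s t P1, dpath tl hd s t P2 & [disjoint P1 & P2]].
Proof.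
move=> Hcut.
have [P /andP[HP _]] : exists P, dpath tl hd s t P && all (fun e => e \in [set: E]) P.
  apply: extract => X Hs Ht.
  have := Hcut X Hs Ht; rewrite /din => /(leq_trans (isT : 0 < 2)%N).
  by rewrite card_gt0 => /set0Pn [e]; rewrite inE => He; exists e; rewrite ?inE.
pose rr : rel V := fun u w => [exists e, ((e \notin P) && (tl e == u) && (hd e == w))
                                     || ((e \in P) && (hd e == u) && (tl e == w))].
case: (boolP (connect rr s t)) => Hc.
  pose src (x : E * bool) := if x.2 then tl x.1 else hd x.1.
  pose dst (x : E * bool) := if x.2 then hd x.1 else tl x.1.
  pose ok (x : E * bool) := x.2 == (x.1 \notin P).
  have Hr : forall u w, rr u w -> exists x, [&& ok x, src x == u & dst x == w].
    move=> u w /existsP [e /orP [/andP[/andP[H1 H2] H3]|/andP[/andP[H1 H2] H3]]].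
      by exists (e, true); rewrite /ok /src /dst /= H1 H2 H3.
    by exists (e, false); rewrite /ok /src /dst /= H1 H2 H3.
  have [Q /and4P[Q1 Q2 Q3 Q4]] := connect_gwalk Hr Hc.
  have QU : uniq Q by move: Q3 => /= /andP[_ /map_uniq].
  pose g e : int := (e \in P)%:Z + ((e, true) \in Q)%:Z - ((e, false) \in Q)%:Z.
  have Hg : forall e, g e = (g e == 1)%:Z.
    move=> e; rewrite /g.
    case: (boolP ((e, true) \in Q)) => Ht.
      have := allP Q4 _ Ht; rewrite /ok /= => /eqP/esym/negPf ->.
      by case: (boolP ((e, false) \in Q)).
    case: (boolP ((e, false) \in Q)) => Hf //.
      by have := allP Q4 _ Hf; rewrite /ok /= => /eqP/esym/negbFE ->.
    by case: (e \in P).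
  pose F := [set e | g e == 1].
  have HF : forall v, bal tl hd F v = (1.+1)%:Z * ((t == v)%:Z - (s == v)%:Z).
    move=> v.
    have -> : bal tl hd F v = \sum_e g e * dd tl hd e v.
      rewrite /bal big_mkcond /=; apply: eq_bigr => e _.
      rewrite inE [in RHS]Hg; case: (g e == 1) => /=; by rewrite ?mul1r ?mul0r.
    have -> : \sum_e g e * dd tl hd e v =
        \sum_e (e \in P)%:Z * dd tl hd e v +
        \sum_e (((e, true) \in Q)%:Z - ((e, false) \in Q)%:Z) * dd tl hd e v.
      by rewrite -big_split /=; apply: eq_bigr => e _; rewrite /g; ring.
    have -> : \sum_e (e \in P)%:Z * dd tl hd e v = bal tl hd [set e in P] v.
      rewrite /bal [in RHS]big_mkcond /=; apply: eq_bigr => e _.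
      by rewrite inE; case: (e \in P); rewrite ?mul1r ?mul0r.
    rewrite (dpath_bal _ HP).
    have -> : \sum_e (((e, true) \in Q)%:Z - ((e, false) \in Q)%:Z) * dd tl hd e v =
              \sum_(x <- Q) ((dst x == v)%:Z - (src x == v)%:Z).
      rewrite [RHS]big_uniq // [RHS]big_mkcond /=.
      transitivity (\sum_(e : E) \sum_(b : bool)
           (if (e, b) \in Q then (dst (e, b) == v)%:Z - (src (e, b) == v)%:Z else 0)).
        apply: eq_bigr => e _; rewrite big_bool /= /dd.
        by case: ((e, true) \in Q); case: ((e, false) \in Q) => /=; ring.
      by rewrite pair_big /=; apply: eq_bigr => [[e b]] _.
    rewrite (gwalk_sum v Q1) (eqP Q2); ring.
  have [P1 /andP[HP1 HP1F]] := extract_bal HF.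
  have HsubF : [set e in P1] \subset F.
    by apply/subsetP => e; rewrite inE => He; exact: (allP HP1F).
  pose F' := F :\: [set e in P1].
  have HF' : forall v, bal tl hd F' v = (0.+1)%:Z * ((t == v)%:Z - (s == v)%:Z).
    move=> v; have := HF v; rewrite /bal (big_setID [set e in P1]) /=.
    rewrite (setIidPr HsubF) -/(bal tl hd [set e in P1] v) (dpath_bal _ HP1) => H.
    rewrite /F'; lra.
  have [P2 /andP[HP2 HP2F]] := extract_bal HF'.
  exists P1, P2; split => //.
  apply/pred0P => e /=; apply/negP => /andP[H1 H2].
  by have := allP HP2F _ H2; rewrite !inE H1.
exfalso.
pose X := [set v | ~~ connect rr s v].
have HsX : s \notin X by rewrite inE connect0.
have HtX : t \in X by rewrite inE.
have H2 := Hcut X HsX HtX.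
have Ha : forall e, (tl e \notin X) -> (hd e \in X) -> e \in P.
  move=> e; rewrite !inE negbK => H1 /negP H2'; apply/negPn/negP => He; apply: H2'.
  apply: connect_trans H1 (connect1 _); apply/existsP; exists e; by rewrite He !eqxx.
have Hb : forall e, e \in P -> tl e \in X -> hd e \in X.
  move=> e He; rewrite !inE => H1; apply/negP => H2'; apply: (negP H1).
  apply: connect_trans H2' (connect1 _); apply/existsP; exists e; by rewrite He !eqxx orbT.
have E1 := cut_sum tl hd [set e in P] X.
rewrite (eq_bigr _ (fun v _ => dpath_bal v HP)) sumrB !(sum_indZ (fun v => v \in X)) HtX (negPf HsX) in E1.
have E2 : (din tl hd X)%:Z = \sum_(e in [set e in P]) ((tl e \notin X) && (hd e \in X) : nat)%:Z.
  rewrite /din card_sum PoszSum [in RHS]big_mkcond /=; apply: eq_bigr => e _.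
  rewrite inE; case: (boolP (e \in P)) => // He.
  by case: (boolP (tl e \in X)) => h1 //=; case: (boolP (hd e \in X)) => h2 //=; have := Ha e h1 h2; rewrite (negPf He).
have E3 : \sum_(e in [set e in P]) ((hd e \in X)%:Z - (tl e \in X)%:Z) =
          \sum_(e in [set e in P]) ((tl e \notin X) && (hd e \in X) : nat)%:Z.
  apply: eq_bigr => e; rewrite inE => He.
  by case: (boolP (tl e \in X)) => h1 /=; [rewrite (Hb e He h1) | case: (hd e \in X)].
rewrite E3 -E2 in E1.
have Hd : din tl hd X = 1%N by apply/eqP; rewrite -eqz_nat -E1.
by move: H2; rewrite Hd.
Qed.

End F.

Unset Implicit Arguments.

Theorem claim6p3 (R : realFieldType) (V E : finType) (tl hd : E -> V)
  (s t : V) :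
  strongly_connected tl hd ->
  (inB1 tl hd (fun v => (indeg hd v)%:R + chi R s v - chi R t v) <->
   exists P1 P2 : seq E,
     [/\ dpath tl hd s t P1, dpath tl hd s t P2 & [disjoint P1 & P2]]).
Proof.
move=> Hsc.
have HT0 : (setT : {set V}) == set0 = false.
  by apply/negP => /eqP H; have := in_setT s; rewrite H inE.
have HxT : xsum (fun v => (indeg hd v)%:R + chi R s v - chi R t v) setT = (p1 tl hd setT)%:R.
  by rewrite (xsum_eq tl) (iGT tl hd) (dinT tl hd) (p1T tl hd s) !inE addn0; lra.
split.
  case=> _ HX; apply: fwd => X Hs Ht.
  have := HX X; rewrite /p1.
  have -> : (X == set0) = false by apply/negP => /eqP H; rewrite H inE in Ht.
  have -> : (X == setT) = false by apply/negP => /eqP H; rewrite H inE in Hs.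
  rewrite (xsum_eq tl) (negPf Hs) Ht /= => H.
  rewrite -(leq_add2l (iG tl hd X)) -(ler_nat R) natrD.
  move: H; rewrite -addn1 !natrD; lra.
case=> P1 [P2 [H1 H2 Hd]]; split => // X.
rewrite /p1; case: eqP => [->|/eqP HX0]; first by rewrite /xsum big_set0.
case: eqP => [->|/eqP HXT]; first by rewrite HxT /p1 HT0 eqxx.
have Hdin1 : (1 <= din tl hd X)%N.
  have [w Hw] := set0Pn _ HX0.
  have [u Hu] : exists u, u \notin X.
    case: (pickP (fun u => u \notin X)) => [u Hu|H]; first by exists u.
    exfalso; apply: (negP HXT); apply/eqP/setP => u; rewrite inE.
    by have := H u => /= /negbFE.
  have [e He] := connect_enter (Hsc u w) Hu Hw.
  by rewrite /din card_gt0; apply/set0Pn; exists e; rewrite inE.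
have key : (1 + (t \in X) <= din tl hd X + (s \in X))%N.
  case: (boolP (s \in X)) => Hs; case: (boolP (t \in X)) => Ht /=.
  - by move: Hdin1; lia.
  - by move: Hdin1; lia.
  - have [e1 He1 En1] := walk_enter (proj1 (andP H1)) Hs Ht.
    have [e2 He2 En2] := walk_enter (proj1 (andP H2)) Hs Ht.
    have Hne : e1 != e2.
      apply/eqP => E12; move: Hd => /pred0P /(_ e1) /=; by rewrite He1 E12 He2.
    rewrite addn0 /din.
    have Hsub : [set e1; e2] \subset [set e | (tl e \notin X) && (hd e \in X)].
      by apply/subsetP => e; rewrite !inE => /orP [] /eqP ->.
    by have := subset_leq_card Hsub; rewrite cards2 Hne.
  - by move: Hdin1; lia.
rewrite (xsum_eq tl).
have : ((iG tl hd X).+1 + (t \in X))%:R <= ((iG tl hd X + din tl hd X) + (s \in X))%:R :> R.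
  by rewrite ler_nat -addn1 -addnA [(1 + _)%N]addnC -addnA leq_add2l addnC.
rewrite -addn1 !natrD; lra.
Qed.
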